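(* Let $\sigma(x,y)=(x\rightharpoonup y,x\leftharpoonup y)$ be a right-non-degenerate involutive quiver-theoretic Yang--Baxter map on a quiver $\mathscr{A}$ over $\Lambda$. For $x,y\in\mathscr{A}$ with $\mathfrak{t}(x)=\mathfrak{t}(y)$ set $x\bullet y:=(\cdot\leftharpoonup x)^{-1}(y)$. Then $(\mathscr{A},\bullet)$ is a left-non-degenerate weak co-RC-system, and $x\bullet y$ is defined whenever $\mathfrak{t}(x)=\mathfrak{t}(y)$.
   Context: A quiver over $\Lambda$ has source/target maps $\mathfrak{s},\mathfrak{t}$; $Q(\lambda,\Lambda)$ (resp. $Q(\Lambda,\mu)$) denotes arrows with source $\lambda$ (resp. target $\mu$). A quiver-theoretic Yang--Baxter map is a source/target-preserving map $\sigma$ on composable pairs $\mathscr{A}\otimes\mathscr{A}$ satisfying the braid relation $(\sigma\otimes\mathrm{id})(\mathrm{id}\otimes\sigma)(\sigma\otimes\mathrm{id})=(\mathrm{id}\otimes\sigma)(\sigma\otimes\mathrm{id})(\mathrm{id}\otimes\sigma)$; involutive: $\sigma^2=\mathrm{id}$; right-non-degenerate: each $\cdot\leftharpoonup y\colon\mathscr{A}(\Lambda,\mathfrak{s}(y))\to\mathscr{A}(\Lambda,\mathfrak{t}(y))$ is bijective. A weak co-RC-system $(Q,\bullet)$ is a quiver $Q$ with a partially defined binary operation $\bullet$ such that: $x\bullet y$ is defined only if $\mathfrak{t}(x)=\mathfrak{t}(y)$; whenever $x\bullet y$ is defined, $y\bullet x$ is defined, $\mathfrak{t}(x\bullet y)=\mathfrak{s}(x)$,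 $\mathfrak{t}(y\bullet x)=\mathfrak{s}(y)$, $\mathfrak{s}(x\bullet y)=\mathfrak{s}(y\bullet x)$; and whenever $x\bullet y$, $x\bullet z$, $(x\bullet y)\bullet(x\bullet z)$ are defined, then $y\bullet z$ and $(y\bullet x)\bullet(y\bullet z)$ are defined and $(x\bullet y)\bullet(x\bullet z)=(y\bullet x)\bullet(y\bullet z)$. It is left-non-degenerate if every map $x\bullet\cdot\colon Q(\Lambda,\mathfrak{t}(x))\to Q(\Lambda,\mathfrak{s}(x))$ is a bijection. *)

(* Defs.v *)
From Stdlib Require Import Classical ClassicalEpsilon.

Set Implicit Arguments.

Section Quiver.
Variables (L A : Type) (s t : A -> L).

(* A pair (x,y) is composable (lies in A ⊗ A) when t x = s y. *)
Definition composable (x y : A) : Prop := t x = s y.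

(* A map sigma on composable pairs, written sigma(x,y) = (rh x y, lh x y)
   with rh = "⇀" and lh = "↼". The functions rh, lh are total but only
   their values on composable pairs matter. *)

Definition st_preserving (rh lh : A -> A -> A) : Prop :=
  forall x y, composable x y ->
    s (rh x y) = s x /\ t (rh x y) = s (lh x y) /\ t (lh x y) = t y.

Definition sig12 (rh lh : A -> A -> A) (w : A * A * A) : A * A * A :=
  let '(a, b, c) := w in (rh a b, lh a b, c).
Definition sig23 (rh lh : A -> A -> A) (w : A * A * A) : A * A * A :=
  let '(a, b, c) := w in (a, rh b c, lh b c).

Definition braid (rh lh : A -> A -> A) : Prop :=
  forall x y z, composable x y -> composable y z ->
    sig12 rh lh (sig23 rh lh (sig12 rh lh (x, y, z)))
    = sig23 rh lh (sig12 rh lh (sig23 rh lh (x, y, z))).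

Definition qYB_map (rh lh : A -> A -> A) : Prop :=
  st_preserving rh lh /\ braid rh lh.

Definition involutive_map (rh lh : A -> A -> A) : Prop :=
  forall x y, composable x y ->
    rh (rh x y) (lh x y) = x /\ lh (rh x y) (lh x y) = y.

Definition right_nondeg (lh : A -> A -> A) : Prop :=
  forall y,
    (forall x1 x2, t x1 = s y -> t x2 = s y -> lh x1 y = lh x2 y -> x1 = x2)
    /\ (forall z, t z = t y -> exists x, t x = s y /\ lh x y = z).

(* Partial binary operation: op x y = Some z means x • y is defined and equals z. *)
Definition weak_coRC (op : A -> A -> option A) : Prop :=
  (forall x y z, op x y = Some z -> t x = t y)
  /\ (forall x y u, op x y = Some u ->
        exists v, op y x = Some v /\
          t u = s x /\ t v = s y /\ s u = s v)
  /\ (forall x y z u v w,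
        op x y = Some u -> op x z = Some v -> op u v = Some w ->
        exists p q, op y z = Some p /\ op y x = Some q /\ op q p = Some w).

Definition left_nondeg (op : A -> A -> option A) : Prop :=
  forall x,
    (forall y, t y = t x -> exists z, op x y = Some z /\ t z = s x)
    /\ (forall y1 y2 z, t y1 = t x -> t y2 = t x ->
          op x y1 = Some z -> op x y2 = Some z -> y1 = y2)
    /\ (forall w, t w = s x -> exists y, t y = t x /\ op x y = Some w).

(* x • y := (· ↼ x)^{-1}(y), for t x = t y: the (chosen) arrow z with
   t z = s x and z ↼ x = y, if any; undefined otherwise. *)
Definition bullet (lh : A -> A -> A) (x y : A) : option A :=
  match excluded_middle_informative
          (exists z, t x = t y /\ t z = s x /\ lh z x = y) with
  | left H => Some (proj1_sig (constructive_indefinite_description _ H))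
  | right _ => None
  end.

End Quiver.

(* Main.v *)
Require Import Defs.
From Stdlib Require Import Classical ClassicalEpsilon.

Section S.
Variables (L A : Type) (s t : A -> L) (rh lh : A -> A -> A).
Hypothesis RN : right_nondeg s t lh.

Lemma bullet_fw x y z : bullet s t lh x y = Some z ->
  t x = t y /\ t z = s x /\ lh z x = y.
Proof.
  unfold bullet. destruct excluded_middle_informative as [H|H]; [|discriminate].
  intro E. injection E as <-.
  exact (proj2_sig (constructive_indefinite_description _ H)).
Qed.

Lemma bullet_bw x y z : t x = t y -> t z = s x -> lh z x = y ->
  bullet s t lh x y = Some z.
Proof.
  intros H1 H2 H3. unfold bullet.
  destruct excluded_middle_informative as [H|H].
  - pose proof (proj2_sig (constructive_indefinite_description _ H)) as [_ [Hz1 Hz2]].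
    f_equal. apply (proj1 (RN x)); congruence.
  - exfalso. apply H. eauto.
Qed.

Lemma bullet_def x y : t x = t y -> exists z, bullet s t lh x y = Some z /\ t z = s x.
Proof.
  intro H. destruct (proj2 (RN x) y (eq_sym H)) as [z [Hz1 Hz2]].
  exists z. split; [apply bullet_bw|]; auto.
Qed.
End S.
Arguments bullet_fw {L A s t lh x y z}.
Arguments bullet_bw {L A s t lh} RN {x y z}.
Arguments bullet_def {L A s t lh} RN {x y}.

Theorem proposition5p2 (L A : Type) (s t : A -> L) (rh lh : A -> A -> A) :
  qYB_map s t rh lh ->
  involutive_map s t rh lh ->
  right_nondeg s t lh ->
  weak_coRC s t (bullet s t lh) /\ left_nondeg s t (bullet s t lh) /\
  (forall x y, t x = t y -> exists z, bullet s t lh x y = Some z).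
Proof.
  intros [ST BR] INV RN.
  assert (SW : forall x y u, bullet s t lh x y = Some u ->
     bullet s t lh y x = Some (rh u x) /\ t u = s x /\ t (rh u x) = s y /\ s u = s (rh u x)).
  { intros x y u H. destruct (bullet_fw H) as [H1 [H2 H3]].
    destruct (ST u x H2) as [S1 [S2 S3]].
    destruct (INV u x H2) as [I1 I2].
    rewrite H3 in S2, S3, I1, I2.
    repeat split; auto.
    apply (bullet_bw RN); auto; congruence. }
  split; [split; [|split]|split].
  - intros x y z H. exact (proj1 (bullet_fw H)).
  - intros x y u H. destruct (SW x y u H) as [A1 [A2 [A3 A4]]].
    exists (rh u x). auto.
  - intros x y z u v w Hu Hv Hw.
    destruct (bullet_fw Hu) as [U1 [U2 U3]].
    destruct (bullet_fw Hv) as [V1 [V2 V3]].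
    destruct (bullet_fw Hw) as [W1 [W2 W3]].
    destruct (SW x y u Hu) as [Q1 [_ [Q3 Q4]]].
    destruct (bullet_def RN (x:=y) (y:=z) ltac:(congruence)) as [p [P1 P2]].
    destruct (bullet_fw P1) as [_ [_ P3]].
    exists p, (rh u x). split; [exact P1|split; [exact Q1|]].
    pose proof (BR w u x W2 U2) as B. simpl in B.
    rewrite W3, V3, U3 in B.
    injection B as B1 B2 B3.
    assert (Cq : t w = s (rh u x)) by congruence.
    destruct (ST w (rh u x) Cq) as [_ [_ T3]].
    destruct (ST u x U2) as [_ [R2 _]]. rewrite U3 in R2.
    assert (lh w (rh u x) = p).
    { apply (proj1 (RN y)); try congruence. }
    apply (bullet_bw RN); auto; congruence.
  - intro x. split; [|split].
  + intros y H. destruct (bullet_def RN (x:=x) (y:=y) (eq_sym H)) as [z [Z1 Z2]]. eauto.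
  + intros y1 y2 z _ _ H1 H2.
    destruct (bullet_fw H1) as [_ [_ E1]]. destruct (bullet_fw H2) as [_ [_ E2]].
    congruence.
  + intros w H. exists (lh w x).
    destruct (ST w x H) as [_ [_ T3]].
    split; auto. apply (bullet_bw RN); auto.
  - intros x y H. destruct (bullet_def RN (x:=x) (y:=y) H) as [z [Z1 _]]. eauto.
Qed.
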